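(* Consider a synchronous fully connected network with a source node $0$ and peers $1,\dots,n-1$, with private authenticated point-to-point links, in which up to $t$ nodes (possibly including the source), $t<n/3$, $t\ge 1$, may be faulty and behave arbitrarily. Fix $c$ large enough and fixed publicly known coefficients defining $2(n-1)$ linear maps $y_1,\dots,y_{2(n-1)}:\mathrm{GF}(2^c)^{n-t}\to \mathrm{GF}(2^c)$ such that any $n-t$ of them are linearly independent. Run the following protocol: (Round 1) the source, holding data vector $\tilde x=(x_1,\dots,x_{n-t})\in \mathrm{GF}(2^c)^{n-t}$, sends to each peer $i$ the two packets $y_i(\tilde x)$ and $y_{n-1+i}(\tilde x)$; (Round 2) each peer $i$ sends the packet $y_i$ it received from the source to every other peer. Each fault-free peer, having received its two packets from the source and one packet (claimed to be $y_j$) from each other peer $j$, computes, for every subset of $n-t$ of these $n$ received packets, the solution $\tilde x'$ of the corresponding linear system; it is said to detect misbehavior if these solutions are not all equal (or some system has no solution), and otherwise it decides on the common solution. Then, whatever the faulty nodes do, either at least one fault-free peer detects misbehavior, or all fault-free peers decide on the same vector, and if the source is fault-free this vector equals the source's data vector $\tilde x$.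
   Context: A faulty source may send packets to the peers that are not all values of the maps $y_i$ at a single vector; a faulty peer may forward arbitrary (tampered) packets to other peers. Fault-free nodes follow the protocol exactly. *)

(* Defs.v *)
From mathcomp Require Import all_boot all_algebra.
Set Implicit Arguments. Unset Strict Implicit. Unset Printing Implicit Defensive.
Import GRing.Theory.
Local Open Scope ring_scope.

Section Protocol.
Variable F : fieldType.

(* The linear maps y_k : F^m -> F (k = 1..2(n-1), 1-based as in the paper),
   given by public coefficients coef k. *)
Definition ymap (m : nat) (coef : nat -> 'I_m -> F) (k : nat) (x : 'rV[F]_m) : F :=
  \sum_(j < m) coef k j * x 0 j.

Definition any_independent (m N : nat) (coef : nat -> 'I_m -> F) : Prop :=
  forall f : 'I_m -> nat, injective f -> (forall a, (1 <= f a <= N)%N) ->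
    row_free (\matrix_(a < m, b < m) coef (f a) b).

Variable n : nat.

(* The n packets held by peer i after round 2 are labelled by l : 'I_n:
   label 0 = second packet from the source, claimed y_(n-1+i);
   label i = first packet from the source, claimed y_i;
   label j (j <> 0, j <> i) = packet forwarded by peer j, claimed y_j. *)
Definition label_map (i l : 'I_n) : nat :=
  if (l == 0 :> nat) then (n.-1 + i)%N else l.

Definition label_val (s1 s2 : 'I_n -> F) (r : 'I_n -> 'I_n -> F) (i l : 'I_n) : F :=
  if (l == 0 :> nat) then s2 i else if l == i then s1 i else r i l.

Variable m : nat.
Variable coef : nat -> 'I_m -> F.
Variables (s1 s2 : 'I_n -> F) (r : 'I_n -> 'I_n -> F).

Definition solves (i : 'I_n) (S : {set 'I_n}) (z : 'rV[F]_m) : Prop :=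
  forall l, l \in S -> ymap coef (label_map i l) z = label_val s1 s2 r i l.

Definition decides (i : 'I_n) (v : 'rV[F]_m) : Prop :=
  forall S : {set 'I_n}, #|S| = m -> forall z, solves i S z <-> z = v.

(* misbehavior detected: the solutions are not all equal (or some system
   has no, or no unique, solution) *)
Definition detects (i : 'I_n) : Prop := ~ exists v, decides i v.

End Protocol.

Definition is_source (n : nat) (j : 'I_n) : bool := (j == 0 :> nat).

(* Main.v *)
Require Import Defs.
From mathcomp Require Import all_boot all_algebra.
From mathcomp Require Import zify.
From Stdlib Require Import Classical.
Import GRing.Theory.
Local Open Scope ring_scope.

Lemma subset_card (T : finType) (A : {set T}) k :
  (k <= #|A|)%N -> exists S : {set T}, S \subset A /\ #|S| = k.
Proof.
move=> hk.
exists [set x | x \in take k (enum A)]; split.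
  apply/subsetP => x; rewrite inE => /mem_take; by rewrite mem_enum.
rewrite cardsE (card_uniqP _) ?take_uniq ?enum_uniq // size_takel //.
by rewrite -cardE.
Qed.

Lemma uniqS (F : fieldType) m N (coef : nat -> 'I_m -> F) n (S : {set 'I_n})
  (g : 'I_n -> nat) (u w : 'rV[F]_m) :
  any_independent N coef -> #|S| = m -> {in S &, injective g} ->
  {in S, forall l, (1 <= g l <= N)%N} ->
  {in S, forall l, ymap coef (g l) u = ymap coef (g l) w} -> u = w.
Proof.
move=> hind hS ginj grng heq.
pose f := fun a : 'I_m => g (enum_val (cast_ord (esym hS) a)).
have finj : injective f.
  move=> a b /ginj; move/(_ (enum_valP _) (enum_valP _)).
  by move/enum_val_inj/cast_ord_inj.
have hM := hind f finj (fun a => grng _ (enum_valP _)).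
set M := \matrix_(a, b) coef (f a) b in hM.
have hT : row_free M^T by rewrite /row_free mxrank_tr.
apply: (row_free_inj hT).
apply/rowP => a; rewrite !mxE.
have := heq _ (enum_valP (cast_ord (esym hS) a)); rewrite /ymap => e.
under eq_bigr => j _ do rewrite !mxE mulrC.
under [RHS]eq_bigr => j _ do rewrite !mxE mulrC.
exact: e.
Qed.

Theorem theorem1 (F : finFieldType) (c n t : nat)
  (hF : #|F| = (2 ^ c)%N) (ht1 : (1 <= t)%N) (htn : (3 * t < n)%N)
  (coef : nat -> 'I_(n - t) -> F)
  (hind : any_independent (2 * n.-1) coef)
  (Fs : {set 'I_n}) (hFs : (#|Fs| <= t)%N)
  (x : 'rV[F]_(n - t))
  (s1 s2 : 'I_n -> F) (r : 'I_n -> 'I_n -> F)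
  (* round 1: a fault-free source sends y_i(x) and y_(n-1+i)(x) to peer i *)
  (hsrc : forall j : 'I_n, is_source j -> j \notin Fs ->
     forall i : 'I_n, ~~ is_source i ->
       s1 i = ymap coef i x /\ s2 i = ymap coef (n.-1 + i) x)
  (* round 2: a fault-free peer j forwards to peer i what it got as y_j *)
  (hfwd : forall i j : 'I_n, ~~ is_source i -> ~~ is_source j -> i != j ->
     i \notin Fs -> j \notin Fs -> r i j = s1 j) :
  (exists i : 'I_n, [/\ ~~ is_source i, i \notin Fs & detects coef s1 s2 r i])
  \/
  (exists v : 'rV[F]_(n - t),
     (forall i : 'I_n, ~~ is_source i -> i \notin Fs -> decides coef s1 s2 r i v)
     /\ (forall j : 'I_n, is_source j -> j \notin Fs -> v = x)).
Proof.
have [H|H] := classic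
  (exists i : 'I_n, [/\ ~~ is_source i, i \notin Fs & detects coef s1 s2 r i]).
  by left.
right.
have Hdec : forall i : 'I_n, ~~ is_source i -> i \notin Fs ->
    exists v, decides coef s1 s2 r i v.
  move=> i h1 h2; apply: NNPP => hn; apply: H; exists i; split => //.
have hcard : forall P : {set 'I_n}, ~: P \subset Fs -> (n - t <= #|P|)%N.
  move=> P hP; have := cardsC P; rewrite card_ord => e.
  have := subset_leq_card hP; lia.
have [[j0 [hj0 hj0F]]|hB] := classic (exists j : 'I_n, is_source j /\ j \notin Fs).
  exists x; split => // i hi hiF.
  have [v hv] := Hdec i hi hiF.
  suff -> : x = v by [].
  pose Q := [set l : 'I_n | is_source l || (l \notin Fs)].
  have hQ : ~: Q \subset Fs.
    apply/subsetP => l; rewrite !inE negb_or negbK; by case/andP.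
  have [S [hSQ hS]] := subset_card _ _ _ (hcard Q hQ).
  apply/(hv S hS x) => l lS.
  have := subsetP hSQ l lS; rewrite inE => lQ.
  rewrite /label_map /label_val.
  case: eqP => [_|l0].
    by case: (hsrc j0 hj0 hj0F i hi).
  have hl : ~~ is_source l by apply/eqP.
  have lF : l \notin Fs by move: lQ; rewrite (negbTE hl).
  case: eqP => [->|li].
    by case: (hsrc j0 hj0 hj0F i hi).
  rewrite (hfwd i l hi hl _ hiF lF); last by apply/eqP => e; apply: li.
  by case: (hsrc j0 hj0 hj0F l hl).
have [[i0 [hi0 hi0F]]|hN] :=
  classic (exists i : 'I_n, ~~ is_source i /\ i \notin Fs); last first.
  exists x; split.
    by move=> i hi hiF; exfalso; apply: hN; exists i.
  by move=> j hj hjF; exfalso; apply: hB; exists j.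
have [v0 hv0] := Hdec i0 hi0 hi0F.
exists v0; split; last by move=> j hj hjF; exfalso; apply: hB; exists j.
move=> k hk hkF.
have [vk hvk] := Hdec k hk hkF.
suff <- : vk = v0 by [].
pose P := [set l : 'I_n | ~~ is_source l & l \notin Fs].
have hP : ~: P \subset Fs.
  apply/subsetP => l; rewrite !inE negb_and !negbK => /orP [hl|//].
  by apply: contraT => hlF; exfalso; apply: hB; exists l.
have [S [hSP hS]] := subset_card _ _ _ (hcard P hP).
have good : forall (i : 'I_n) z, ~~ is_source i -> i \notin Fs ->
    solves coef s1 s2 r i S z ->
    {in S, forall l : 'I_n, ymap coef (nat_of_ord l) z = s1 l}.
  move=> i z hi hiF hsol l lS.
  have := subsetP hSP l lS; rewrite inE => /andP [hl lF].
  have := hsol l lS; rewrite /label_map /label_val.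
  have -> : (l == 0 :> nat) = false by apply: negbTE.
  case: eqP => [->//|li].
  rewrite (hfwd i l hi hl _ hiF lF) //; by apply/eqP => e; apply: li.
have sk := good k vk hk hkF (proj2 (hvk S hS vk) erefl).
have s0 := good i0 v0 hi0 hi0F (proj2 (hv0 S hS v0) erefl).
apply: (@uniqS _ _ _ coef _ S (@nat_of_ord n) vk v0 hind hS).
- by move=> a b _ _; apply: val_inj.
- move=> l lS; have := subsetP hSP l lS; rewrite inE => /andP [hl _].
  have := ltn_ord l; move: hl; rewrite /is_source => /eqP hl; lia.
- by move=> l lS; rewrite sk // s0.
Qed.
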